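(* Let $S\subseteq\mathbb{R}^d$ be a finite set, let $p,q\in S$ and let $i\in[d]$ with $p_i\ne q_i$. Let $a_1,\dots,a_\ell>0$ be the lengths, listed in order from $p_i$ to $q_i$, of the consecutive intervals into which the segment between $p_i$ and $q_i$ is partitioned by the projections $\{x_i:x\in S\}$ lying in it. Define $$s_i=\frac{(\sum_{j=1}^\ell a_j)^2}{\sum_{j=1}^\ell a_j^2},\qquad \mathrm{sep}_i=\frac{\sum_{j=1}^\ell a_j^2\min(j,\ell+1-j)}{\sum_{j=1}^\ell a_j^2}.$$ Then $\mathrm{sep}_i\ge\dfrac{s_i}{8\big(1+\ln(2|S|/s_i)\big)}$. *)

(* Defs.v *)
From HB Require Import structures.
From mathcomp Require Import all_boot all_order all_algebra.
From mathcomp Require Import all_classical all_reals all_analysis.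
Set Implicit Arguments. Unset Strict Implicit. Unset Printing Implicit Defensive.
Import Order.TTheory GRing.Theory Num.Theory.
Local Open Scope ring_scope.

Definition proj_breaks (R : realType) (d : nat) (S : seq 'rV[R]_d) (i : 'I_d)
    (a b : R) : seq R :=
  let lo := Num.min a b in let hi := Num.max a b in
  sort <=%R (undup [seq (x : 'rV[R]_d) ord0 i | x <- S & ((lo <= (x : 'rV[R]_d) ord0 i) && ((x : 'rV[R]_d) ord0 i <= hi))]).

Definition gaps (R : realType) (s : seq R) : seq R :=
  [seq nth 0 s j.+1 - nth 0 s j | j <- iota 0 (size s).-1].

Definition seg_lengths (R : realType) (d : nat) (S : seq 'rV[R]_d) (p q : 'rV[R]_d)
    (i : 'I_d) : seq R :=
  gaps (proj_breaks S i (p ord0 i) (q ord0 i)).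

Definition s_ratio (R : realType) (a : seq R) : R :=
  (\sum_(x <- a) x) ^+ 2 / \sum_(x <- a) x ^+ 2.

(* sep_i = sum_{j=1}^l a_j^2 min(j, l+1-j) / sum a_j^2 ; here j is 0-based,
   so the weight of index j is min(j+1, l-j). *)
Definition sep_ratio (R : realType) (a : seq R) : R :=
  (\sum_(j < size a) (nth 0 a j) ^+ 2 * (minn j.+1 (size a - j))%:R)
    / \sum_(x <- a) x ^+ 2.

(* Main.v *)
Require Import Defs.
From HB Require Import structures.
From mathcomp Require Import all_boot all_order all_algebra.
From mathcomp Require Import all_classical all_reals all_analysis.
From mathcomp Require Import ring lra zify.
Import Order.TTheory GRing.Theory Num.Theory.
Local Open Scope ring_scope.

Lemma cs_w (R : realType) (I : Type) (r : seq I) (P : pred I) (u c : I -> R) :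
  (forall i, P i -> 0 < c i) ->
  (\sum_(i <- r | P i) u i) ^+ 2 <=
  (\sum_(i <- r | P i) u i ^+ 2 * c i) * (\sum_(i <- r | P i) (c i)^-1).
Proof.
move=> cpos.
have H : 0 <= \sum_(i <- r | P i) \sum_(j <- r | P j)
   (u i ^+ 2 * c i * (c j)^-1 + u j ^+ 2 * c j * (c i)^-1 - 2 * (u i * u j)).
  apply: sumr_ge0 => i Pi; apply: sumr_ge0 => j Pj.
  have ci := cpos i Pi; have cj := cpos j Pj.
  have -> : u i ^+ 2 * c i * (c j)^-1 + u j ^+ 2 * c j * (c i)^-1 - 2 * (u i * u j)
     = (u i * c i - u j * c j) ^+ 2 * ((c i)^-1 * (c j)^-1).
    by field; apply/andP; split; rewrite gt_eqF.
  by apply: mulr_ge0; [apply: sqr_ge0 | apply: mulr_ge0; rewrite invr_ge0 ltW].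
set A := \sum_(i <- r | P i) u i.
set Pp := \sum_(i <- r | P i) u i ^+ 2 * c i.
set Q := \sum_(i <- r | P i) (c i)^-1.
have E1 : \sum_(i <- r | P i) \sum_(j <- r | P j) u i ^+ 2 * c i * (c j)^-1 = Pp * Q.
  rewrite /Pp /Q mulr_suml; apply: eq_bigr => i _; by rewrite mulr_sumr.
have E2 : \sum_(i <- r | P i) \sum_(j <- r | P j) u j ^+ 2 * c j * (c i)^-1 = Pp * Q.
  rewrite [RHS]mulrC /Pp /Q mulr_suml; apply: eq_bigr => i _; rewrite mulr_sumr.
  by apply: eq_bigr => j _; rewrite mulrC.
have E3 : \sum_(i <- r | P i) \sum_(j <- r | P j) 2 * (u i * u j) = 2 * A ^+ 2.
  rewrite expr2 /A mulr_suml mulr_sumr; apply: eq_bigr => i _.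
  rewrite mulr_sumr mulr_sumr; apply: eq_bigr => j _; by rewrite mulrA.
move: H.
under eq_bigr => i _ do rewrite sumrB big_split /=.
rewrite sumrB big_split /= E1 E2 E3 => H. nra.
Qed.

Lemma minr_mono (R : realType) (c x y : R) : x <= y -> Num.min x c <= Num.min y c.
Proof. by move=> h; apply: le_min2. Qed.

Lemma near_count (R : realType) (l T : nat) :
  \sum_(0 <= j < l | (minn j.+1 (l - j) <= T)%N) (1:R) <= 2 * T%:R.
Proof.
set m := fun x : R => Num.min x T%:R.
rewrite big_mkcond /=.
apply: (@le_trans _ _ (\sum_(0 <= j < l) ((m j.+1%:R - m j%:R)
   + ((- m (l%:R - j.+1%:R)) - (- m (l%:R - j%:R)))))).
  apply: ler_sum_nat => j /andP[_ jl].
  have hm1 : 0 <= m j.+1%:R - m j%:R.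
    by rewrite subr_ge0 /m; apply: minr_mono; rewrite ler_nat.
  have hm2 : 0 <= (- m (l%:R - j.+1%:R)) - (- m (l%:R - j%:R)).
    rewrite opprK addrC subr_ge0 /m; apply: minr_mono; rewrite lerD2l lerN2 ler_nat; lia.
  case: ifP => hw; last by apply: addr_ge0.
  case: (leqP j.+1 (l - j)) => h.
  - have ew : minn j.+1 (l - j) = j.+1 by apply/minn_idPl.
    rewrite ew in hw.
    have -> : m j.+1%:R - m j%:R = 1.
      rewrite /m !min_l ?ler_nat //; last by apply: ltnW.
      by rewrite -natrB // subSnn.
    lra.
  - have ew : minn j.+1 (l - j) = (l - j)%N by apply/minn_idPr; apply: ltnW.
    rewrite ew in hw.
    have -> : (- m (l%:R - j.+1%:R)) - (- m (l%:R - j%:R)) = 1.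
      have e1 : l%:R - j.+1%:R = (l - j.+1)%:R :> R by rewrite natrB.
      have e2 : l%:R - j%:R = (l - j)%:R :> R by rewrite natrB // ltnW.
      rewrite /m e1 e2 !min_l ?ler_nat; try lia.
      have e3 : (l - j)%N = (l - j.+1).+1 by lia.
      by rewrite e3 -[(l - j.+1).+1]addn1 natrD; ring.
    lra.
rewrite big_split /= !telescope_sumr // /m !subrr !subr0.
rewrite (@min_l _ _ 0) ?ler0n // opprK.
have : Num.min l%:R T%:R <= T%:R :> R by rewrite ge_min lexx orbT.
lra.
Qed.

Definition clampG {R : realType} (T K x : R) := ln (Num.max T (Num.min x K)).

Lemma clampG_id (R : realType) (T K x : R) : T <= x -> x <= K -> clampG T K x = ln x.
Proof. by move=> h1 h2; rewrite /clampG min_l // max_r. Qed.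

Lemma clampG_mono (R : realType) (T K x y : R) : 0 < T -> x <= y ->
  clampG T K x <= clampG T K y.
Proof.
move=> T0 xy; rewrite /clampG ler_ln ?posrE.
- by apply: le_max2 => //; apply: le_min2.
- by apply: (lt_le_trans T0); rewrite le_max lexx.
- by apply: (lt_le_trans T0); rewrite le_max lexx.
Qed.

Lemma inv_le_lnB (R : realType) (k : R) : 1 < k -> k^-1 <= ln k - ln (k - 1).
Proof.
move=> k1.
have k0 : 0 < k by lra.
have k10 : 0 < k - 1 by lra.
have : ln (1 + (- k^-1)) <= - k^-1.
  apply: le_ln1Dx; rewrite ltrN2 invf_lt1 //.
have -> : 1 + - k^-1 = (k - 1) / k by field; rewrite gt_eqF.
rewrite ln_div ?posrE //; lra.
Qed.

Lemma far_harm (R : realType) (l T : nat) : (0 < T)%N ->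
  (T%:R <= (l%:R + 1) / 2 :> R) ->
  \sum_(0 <= j < l | (T < minn j.+1 (l - j))%N) ((minn j.+1 (l - j))%:R)^-1
  <= 2 * (ln ((l%:R + 1) / 2) - ln (T%:R : R)).
Proof.
move=> T0 TK.
set K : R := (l%:R + 1) / 2.
set G := clampG (T%:R : R) K.
have Tr0 : 0 < T%:R :> R by rewrite ltr0n.
have Tr1 : 1 <= T%:R :> R by rewrite ler1n.
rewrite big_mkcond /=.
apply: (@le_trans _ _ (\sum_(0 <= j < l) ((G j.+1%:R - G j%:R)
   + ((- G (l%:R - j.+1%:R)) - (- G (l%:R - j%:R)))))).
  apply: ler_sum_nat => j /andP[_ jl].
  have hm1 : 0 <= G j.+1%:R - G j%:R.
    by rewrite subr_ge0 /G; apply: clampG_mono => //; rewrite ler_nat.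
  have hm2 : 0 <= (- G (l%:R - j.+1%:R)) - (- G (l%:R - j%:R)).
    rewrite opprK addrC subr_ge0 /G; apply: clampG_mono => //.
    rewrite lerD2l lerN2 ler_nat; lia.
  case: ifP => hw; last by apply: addr_ge0.
  case: (leqP j.+1 (l - j)) => h.
  - have ew : minn j.+1 (l - j) = j.+1 by apply/minn_idPl.
    rewrite ew in hw *.
    have hj1 : (j.+1%:R : R) <= K.
      rewrite /K ler_pdivlMr // natr1 -natrM ler_nat; lia.
    have hj2 : (T%:R : R) <= j%:R by rewrite ler_nat; lia.
    have hj3 : (T%:R : R) <= j.+1%:R by rewrite ler_nat; lia.
    have g1 : G j.+1%:R = ln j.+1%:R by apply: clampG_id.
    have g2 : G j%:R = ln j%:R.
      by apply: clampG_id => //; apply: le_trans hj1; rewrite ler_nat.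
    have H := @inv_le_lnB R j.+1%:R.
    rewrite -natr1 addrK natr1 in H.
    have : 1 < j.+1%:R :> R by rewrite ltr1n; lia.
    move/H; rewrite g1 g2 => H1; apply: (le_trans H1); rewrite lerDl; exact: hm2.
  - have ew : minn j.+1 (l - j) = (l - j)%N by apply/minn_idPr; apply: ltnW.
    rewrite ew in hw *.
    have e1 : l%:R - j.+1%:R = (l - j.+1)%:R :> R by rewrite natrB.
    have e2 : l%:R - j%:R = (l - j)%:R :> R by rewrite natrB // ltnW.
    have e3 : (l - j)%N = (l - j.+1).+1 by lia.
    rewrite e1 e2 in hm2 *.
    have hj1 : ((l - j)%:R : R) <= K.
      rewrite /K ler_pdivlMr // natr1 -natrM ler_nat; lia.
    have hj2 : (T%:R : R) <= (l - j.+1)%:R by rewrite ler_nat; lia.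
    have hj3 : (T%:R : R) <= (l - j)%:R by rewrite ler_nat; lia.
    have g1 : G (l - j)%:R = ln (l - j)%:R by apply: clampG_id.
    have g2 : G (l - j.+1)%:R = ln (l - j.+1)%:R.
      by apply: clampG_id => //; apply: le_trans hj1; rewrite ler_nat; lia.
    rewrite g1 g2.
    have H := @inv_le_lnB R (l - j)%:R.
    rewrite e3 -natr1 addrK natr1 -e3 in H.
    have : 1 < (l - j)%:R :> R by rewrite ltr1n; lia.
    move/H => H1; apply: (le_trans H1); lra.
rewrite big_split /= !telescope_sumr // /G !subrr !subr0.
have l1 : (1 <= l)%N.
  have : (1 : R) <= (l%:R + 1) / 2 by lra.
  by rewrite ler_pdivlMr // mul1r natr1 ler_nat.
have G0 : clampG T%:R K 0 = ln T%:R.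
  by rewrite /clampG min_l ?max_l // /K; lra.
have Gl : clampG T%:R K l%:R = ln K.
  rewrite /clampG min_r ?max_r //.
  rewrite /K ler_pdivrMr // mulrDr mulr1 lerD2l ler1n //.
rewrite G0 Gl /K; lra.
Qed.

Lemma pow16 (R : realType) (c : R) : 35/32 <= c -> 4 <= c ^+ 16.
Proof.
move=> c0.
have c2 : 1196/1000 <= c^+2 by rewrite expr2; nra.
have c4 : 143/100 <= c^+4.
  have -> : c^+4 = c^+2 * c^+2 by rewrite -exprD.
  move: c2; generalize (c^+2) => d; nra.
have c8 : 204/100 <= c^+8.
  have -> : c^+8 = c^+4 * c^+4 by rewrite -exprD.
  move: c4; generalize (c^+4) => d; nra.
have -> : c^+16 = c^+8 * c^+8 by rewrite -exprD.
move: c8; generalize (c^+8) => d; nra.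
Qed.

Lemma ln4_le (R : realType) : ln (4:R) <= 3/2.
Proof.
have h : (4:R) <= expR (3/2).
  have -> : (3/2 : R) = 16%:R * (3/32) by rewrite -[16%:R]/(16:R); field.
  rewrite expRM_natl; apply: pow16.
  have := expR_ge1Dx (3/32 : R); lra.
by have := h; rewrite -ler_ln ?posrE ?expR_gt0 // expRK.
Qed.

Lemma ln_small (R : realType) (z : R) : 2 <= z -> z <= 4 -> ln z <= 2 - 2 / z.
Proof.
move=> z2 z4.
have z0 : 0 < z by lra.
have e : z = 4 * (1 + (z/4 - 1)) by field.
have h1 : ln (1 + (z/4 - 1)) <= z/4 - 1 by apply: le_ln1Dx; lra.
have h2 := ln4_le R.
have : ln z <= z/4 + 1/2.
  rewrite {1}e lnM ?posrE; [lra | lra | lra].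
have : z/4 + 1/2 <= 2 - 2/z.
  rewrite -subr_ge0.
  have -> : 2 - 2 / z - (z / 4 + 1 / 2) = (z - 2) * (4 - z) / (4 * z) by field; lra.
  apply: divr_ge0; [apply: mulr_ge0; lra | lra].
lra.
Qed.

Lemma sub_sum_le (R : realType) (l : nat) (P : pred nat) (F : nat -> R) :
  (forall j, 0 <= F j) ->
  \sum_(0 <= j < l | P j) F j <= \sum_(0 <= j < l) F j.
Proof.
move=> F0; rewrite [X in _ <= X](bigID P) /= lerDl; exact: sumr_ge0.
Qed.

Lemma main_ineq (R : realType) (l n : nat) (f : nat -> R) :
  (0 < l)%N -> (l < n)%N -> (forall j, (j < l)%N -> 0 < f j) ->
  0 <= ln (2 * n%:R /
     ((\sum_(0 <= j < l) f j) ^+ 2 / \sum_(0 <= j < l) f j ^+ 2)) /\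
  (\sum_(0 <= j < l) f j) ^+ 2 <= 8 * (1 + ln (2 * n%:R /
     ((\sum_(0 <= j < l) f j) ^+ 2 / \sum_(0 <= j < l) f j ^+ 2))) *
     \sum_(0 <= j < l) f j ^+ 2 * (minn j.+1 (l - j))%:R.
Proof.
move=> l0 hln fpos.
set A := \sum_(0 <= j < l) f j.
set B := \sum_(0 <= j < l) f j ^+ 2.
set X := \sum_(0 <= j < l) f j ^+ 2 * (minn j.+1 (l - j))%:R.
have B0 : 0 < B.
  rewrite /B (big_ltn l0) ltr_pwDl ?exprn_gt0 ?fpos //.
  by apply: sumr_ge0 => j _; apply: sqr_ge0.
have A0 : 0 < A.
  rewrite /A (big_ltn l0) ltr_pwDl ?fpos //.
  rewrite big_nat_cond; apply: sumr_ge0 => j /andP[/andP[_ jl] _]; apply: ltW; apply: fpos; lia.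
have XB : B <= X.
  apply: ler_sum_nat => j /andP[_ jl].
  rewrite ler_peMr ?sqr_ge0 // ler1n; lia.
have X0 : 0 < X by lra.
have AB : A ^+ 2 <= l%:R * B.
  have := @cs_w R nat (index_iota 0 l) predT f (fun _ => 1) (fun _ _ => ltr01).
  rewrite /= -/A.
  have -> : \sum_(i <- index_iota 0 l | predT i) f i ^+ 2 * 1 = B.
    by apply: eq_bigr => j _; rewrite mulr1.
  have -> : \sum_(i <- index_iota 0 l | predT i) (1:R)^-1 = l%:R.
    by rewrite invr1 sumr_const_nat subn0.
  by rewrite mulrC.
set s := A ^+ 2 / B.
have s0 : 0 < s by rewrite /s divr_gt0 // exprn_gt0.
have A2 : A ^+ 2 = s * B by rewrite /s divfK // gt_eqF.
have sl : s <= l%:R by rewrite /s ler_pdivrMr.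
have nl : (l%:R + 1 <= n%:R :> R) by rewrite natr1 ler_nat.
set L := ln (2 * n%:R / s).
have L0 : 0 <= L.
  apply: ln_ge0; rewrite ler_pdivlMr // mul1r; lra.
split; first exact: L0.
case: (ltP s 8) => s8.
  rewrite A2.
  have : 0 <= L * X by apply: mulr_ge0; lra.
  nra.
have [T /andP[hT1 hT2]] : exists T : nat, (T%:R <= s / 8) && (s / 8 < T.+1%:R).
  by exists (Num.Def.trunc (s / 8)); apply: truncn_itv; lra.
set Tr : R := T%:R.
have T0 : (0 < T)%N.
  have : (1 : R) < T.+1%:R by lra.
  by rewrite ltr1n.
have Tr1 : 1 <= Tr by rewrite /Tr ler1n.
have {}hT2 : s / 8 < Tr + 1 by rewrite /Tr natr1.
set w := fun j => minn j.+1 (l - j).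
set AN := \sum_(0 <= j < l | (w j <= T)%N) f j.
set AF := \sum_(0 <= j < l | ~~ (w j <= T)%N) f j.
have eA : A = AN + AF by rewrite /A (bigID (fun j => (w j <= T)%N)).
have hN : AN ^+ 2 <= 2 * Tr * B.
  have := @cs_w R nat (index_iota 0 l) (fun j => (w j <= T)%N) f (fun _ => 1)
     (fun _ _ => ltr01).
  rewrite -/AN.
  have -> : \sum_(i <- index_iota 0 l | (w i <= T)%N) (1:R)^-1
     = \sum_(0 <= j < l | (minn j.+1 (l - j) <= T)%N) (1:R).
    by apply: eq_bigr => j _; rewrite invr1.
  have h1 := near_count R l T.
  have h2 : \sum_(i <- index_iota 0 l | (w i <= T)%N) f i ^+ 2 * 1 <= B.
    under eq_bigr => j _ do rewrite mulr1.
    by apply: sub_sum_le => j; apply: sqr_ge0.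
  move=> h3; apply: (le_trans h3).
  rewrite -/Tr in h1.
  have : 0 <= \sum_(0 <= j < l | (minn j.+1 (l - j) <= T)%N) (1:R) by apply: sumr_ge0.
  have : 0 <= \sum_(i <- index_iota 0 l | (w i <= T)%N) f i ^+ 2 * 1.
    by apply: sumr_ge0 => j _; rewrite mulr1 sqr_ge0.
  nra.
set K : R := (l%:R + 1) / 2.
have TK : Tr <= K by rewrite /K; lra.
have hF : AF ^+ 2 <= X * (2 * (ln K - ln Tr)).
  have := @cs_w R nat (index_iota 0 l) (fun j => ~~ (w j <= T)%N) f (fun j => (w j)%:R).
  rewrite -/AF.
  have -> : \sum_(i <- index_iota 0 l | ~~ (w i <= T)%N) ((w i)%:R)^-1
     = \sum_(0 <= j < l | (T < minn j.+1 (l - j))%N) ((minn j.+1 (l - j))%:R : R)^-1.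
    by apply: eq_bigl => j; rewrite -ltnNge.
  have h1 := @far_harm R l T T0 TK.
  have h2 : \sum_(i <- index_iota 0 l | ~~ (w i <= T)%N) f i ^+ 2 * (w i)%:R <= X.
    by apply: sub_sum_le => j; rewrite mulr_ge0 ?sqr_ge0.
  have h0 : forall i, ~~ (w i <= T)%N -> 0 < (w i)%:R :> R.
    by move=> i; rewrite -ltnNge ltr0n => /(leq_ltn_trans (leq0n _)).
  move=> /(_ h0) h3; apply: (le_trans h3).
  rewrite -/K -/Tr in h1.
  have : 0 <= \sum_(0 <= j < l | (T < minn j.+1 (l - j))%N) ((minn j.+1 (l - j))%:R : R)^-1.
    by apply: sumr_ge0 => j _; rewrite invr_ge0 ler0n.
  have : 0 <= \sum_(i <- index_iota 0 l | ~~ (w i <= T)%N) f i ^+ 2 * (w i)%:R.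
    by apply: sumr_ge0 => j _; rewrite mulr_ge0 ?sqr_ge0.
  nra.
set z := s / (4 * Tr).
have Tr0 : 0 < Tr by lra.
have z2 : 2 <= z by rewrite /z ler_pdivlMr; lra.
have z4 : z <= 4 by rewrite /z ler_pdivrMr; lra.
have hz := @ln_small R z z2 z4.
have hK : ln K - ln Tr <= L + ln z.
  rewrite -ln_div ?posrE; [|lra|lra].
  rewrite /L -lnM ?posrE; last by lra.
    rewrite ler_ln ?posrE; first last.
    - apply: mulr_gt0; first by apply: divr_gt0; lra.
      by apply: divr_gt0; lra.
    - by apply: divr_gt0; lra.
    have -> : 2 * n%:R / s * z = n%:R / (2 * Tr) by rewrite /z; field; apply/andP; split; lra.
    have -> : n%:R / (2 * Tr) = (n%:R / 2) / Tr by field; lra.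
    rewrite ler_pM2r ?invr_gt0 // /K; lra.
  by apply: divr_gt0; lra.
set q := 2 / z in hz *.
have eq : 4 * Tr * B = q / 2 * A ^+ 2.
  rewrite A2 /q /z; field; apply/andP; split; lra.
have q1 : q <= 1 by rewrite /q ler_pdivrMr; lra.
have q0 : 0 <= q by rewrite /q divr_ge0; lra.
have hA : A ^+ 2 <= 2 * AN ^+ 2 + 2 * AF ^+ 2.
  rewrite eA; have := sqr_ge0 (AN - AF); rewrite !expr2; nra.
have key : (1 - q / 2) * A ^+ 2 <= 4 * X * (L + 2 - q).
  have : X * (ln K - ln Tr) <= X * (L + 2 - q) by rewrite ler_pM2l //; lra.
  nra.
have : (1 - q / 2) * A ^+ 2 <= (1 - q / 2) * (8 * (1 + L) * X).
  apply: (le_trans key).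
  have : 0 <= (1 - q) * (L * X) by apply: mulr_ge0; [|apply: mulr_ge0]; lra.
  nra.
rewrite ler_pM2l; last lra.
done.
Qed.

Theorem lemmaC1 (R : realType) (d : nat) (S : seq 'rV[R]_d) (p q : 'rV[R]_d)
    (i : 'I_d) :
  uniq S -> p \in S -> q \in S -> p ord0 i != q ord0 i ->
  let a := seg_lengths S p q i in
  s_ratio a / (8 * (1 + ln (2 * (size S)%:R / s_ratio a))) <= sep_ratio a.
Proof.
move=> _ pS qS pq.
rewrite /=.
set b := proj_breaks S i (p ord0 i) (q ord0 i).
have ea : seg_lengths S p q i = gaps b by [].
rewrite ea.
have bsorted : sorted <%R b.
  rewrite lt_sorted_uniq_le; apply/andP; split.
    by rewrite /b /proj_breaks sort_uniq undup_uniq.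
  by apply: sort_sorted; exact: le_total.
have inb : forall x, x \in S -> Num.min (p ord0 i) (q ord0 i) <= x ord0 i <= Num.max (p ord0 i) (q ord0 i) ->
   x ord0 i \in b.
  move=> x xS hx; rewrite /b /proj_breaks mem_sort mem_undup.
  by apply/mapP; exists x => //; rewrite mem_filter hx.
have pb : p ord0 i \in b.
  by apply: inb => //; rewrite ge_min le_max !lexx.
have qb : q ord0 i \in b.
  by apply: inb => //; rewrite ge_min le_max !lexx !orbT.
have sb2 : (2 <= size b)%N.
  have := @uniq_leq_size _ [:: p ord0 i; q ord0 i] b.
  rewrite /= inE pq /=; apply => // x; rewrite !inE => /orP[] /eqP -> //.
have sbS : (size b <= size S)%N.
  rewrite /b /proj_breaks size_sort.
  apply: leq_trans (size_undup _) _; rewrite size_map size_filter; exact: count_size.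
set a := gaps b.
have sa : size a = (size b).-1 by rewrite /a /gaps size_map size_iota.
have fpos : forall j, (j < size a)%N -> 0 < nth 0 a j.
  move=> j; rewrite sa => hj.
  rewrite /a /gaps (nth_map 0%N) ?size_iota // nth_iota // add0n subr_gt0.
  have [h1 h2] : (j < size b)%N /\ (j.+1 < size b)%N.
    by move: hj sb2; case: (size b) => [|m] //= hj _; split; lia.
  by apply: (sorted_ltn_nth lt_trans 0 bsorted); rewrite ?inE.
have l0 : (0 < size a)%N by rewrite sa; lia.
have lS : (size a < size S)%N by rewrite sa; lia.
have [L0 H] := @main_ineq R (size a) (size S) (nth 0 a) l0 lS fpos.
have eA : \sum_(x <- a) x = \sum_(0 <= j < size a) nth 0 a j by rewrite (big_nth 0).
have eB : \sum_(x <- a) x ^+ 2 = \sum_(0 <= j < size a) nth 0 a j ^+ 2 by rewrite (big_nth 0).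
have eX : \sum_(j < size a) a`_j ^+ 2 * (minn j.+1 (size a - j))%:R
   = \sum_(0 <= j < size a) a`_j ^+ 2 * (minn j.+1 (size a - j))%:R by rewrite big_mkord.
rewrite /s_ratio /sep_ratio eA eB eX.
rewrite -eB -eA in H L0 *.
set A := \sum_(x <- a) x in H L0 *.
set B := \sum_(x <- a) x ^+ 2 in H L0 *.
set X := \sum_(0 <= j < size a) _ in H *.
set L := ln _ in H L0 *.
have B0 : 0 < B.
  rewrite /B (big_nth 0) (big_ltn l0) ltr_pwDl ?exprn_gt0 ?fpos //.
  by apply: sumr_ge0 => j _; apply: sqr_ge0.
rewrite ler_pdivrMr; last lra.
rewrite [X in _ <= X]mulrAC ler_pM2r ?invr_gt0 //.
by rewrite mulrC.
Qed.
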